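(* Let $B=2\pi/\sqrt{6}$. For all sufficiently large integers $N$ and all integers $\ell$ with $\sqrt{N}(\log N)^2<|\ell|\le N/2$, $$V_d\left(\ell,\,N+\frac{|\ell|(|\ell|+1)}{2}\right)=p(N)\left(1+O\left(N^{-\sqrt{\log N}}\right)\right),$$ with an absolute implied constant.
   Context: A strongly concave composition of a nonnegative integer $n$ is a finite sequence of nonnegative integers $(a_1,\dots,a_s)$, $s\ge 1$, summing to $n$, such that for some index $k$ with $1\le k\le s$ one has $a_1>a_2>\dots>a_{k-1}>a_k<a_{k+1}<\dots<a_s$. Its rank is $s-2k+1$. $V_d(m,n)$ denotes the number of strongly concave compositions of $n$ with rank $m$. $p(n)$ is the partition function, with $p(n)=0$ for negative $n$. *)

(* Defs.v *)
From Stdlib Require Import Reals ZArith Arith List Lia Bool.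
Open Scope bool_scope.
Import ListNotations.

Fixpoint lists_of_len (len bound : nat) : list (list nat) :=
  match len with
  | O => [ [] ]
  | S l => flat_map (fun x => map (cons x) (lists_of_len l bound)) (seq 0 (S bound))
  end.

Definition lists_upto (maxlen bound : nat) : list (list nat) :=
  flat_map (fun len => lists_of_len len bound) (seq 0 (S maxlen)).

Definition sumn (a : list nat) : nat := fold_right Nat.add 0 a.

(* a is 0-indexed here: a_i (1-indexed, as in the paper) = nth (i-1) a 0. *)
Definition a_at (a : list nat) (i : nat) : nat := nth (i - 1) a 0.

Definition sc_at (a : list nat) (k : nat) : bool :=
  let s := length a in
  (1 <=? k) && (k <=? s) &&
  forallb (fun i => a_at a (S i) <? a_at a i) (seq 1 (k - 1)) &&
  forallb (fun i => a_at a i <? a_at a (S i)) (seq k (s - k)).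

Definition sc_rank (a : list nat) (m : Z) : bool :=
  existsb (fun k => sc_at a k &&
                    Z.eqb (Z.of_nat (length a) - 2 * Z.of_nat k + 1) m)
          (seq 1 (length a)).

(* Every such composition has s >= 1 and is enumerated: entries are <= n
   (they sum to n) and the length is <= n+1 (a_k is the strict unique
   minimum, so at most one entry is 0, all others are >= 1). *)
Definition V_d (m : Z) (n : nat) : nat :=
  length (filter (fun a => (1 <=? length a) && (sumn a =? n) && sc_rank a m)
                 (lists_upto (S n) n)).

Fixpoint nonincr (a : list nat) : bool :=
  match a with
  | x :: ((y :: _) as t) => (y <=? x) && nonincr t
  | _ => true
  end.

Definition part_count (n : nat) : nat :=
  length (filter (fun a => (sumn a =? n) && forallb (fun x => 1 <=? x) a && nonincr a)
                 (lists_upto n n)).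

Definition p (n : Z) : nat := if (n <? 0)%Z then 0 else part_count (Z.to_nat n).

(* Main.v *)
Require Import Defs.
From Stdlib Require Import Reals ZArith Arith List Lia Lra.
From mathcomp Require ssreflect ssrfun ssrbool eqtype ssrnat seq path bigop div.
From mathcomp Require zify.

Module Comb.
Import ssreflect ssrfun ssrbool eqtype ssrnat seq path bigop div zify.
Set Implicit Arguments. Unset Strict Implicit. Unset Printing Implicit Defensive.

Lemma lenE (T : Type) (l : list T) : List.length l = size l.
Proof. by elim: l => //= x l ->. Qed.
Lemma mapE (A B : Type) (f : A -> B) l : List.map f l = map f l.
Proof. by elim: l => //= x l ->. Qed.
Lemma filterE (A : Type) (f : A -> bool) l : List.filter f l = filter f l.
Proof. by elim: l => //= x l ->. Qed.
Lemma flat_mapE (A B : Type) (f : A -> list B) l : List.flat_map f l = flatten (map f l).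
Proof. by elim: l => //= x l ->. Qed.
Lemma seqE a n : List.seq a n = iota a n.
Proof. by elim: n a => //= n IH a; rewrite IH. Qed.
Lemma forallbE (A : Type) (f : A -> bool) l : forallb f l = all f l.
Proof. by elim: l => //= x l ->. Qed.
Lemma existsbE (A : Type) (f : A -> bool) l : existsb f l = has f l.
Proof. by elim: l => //= x l ->. Qed.
Lemma sumnE' l : Defs.sumn l = sumn l.
Proof. by elim: l => //= x l ->. Qed.
Lemma nthE (A : Type) i (l : list A) d : List.nth i l d = nth d l i.
Proof. by elim: l i => [|x l IH] [|i] //=. Qed.
Lemma lebE a b : (a <=? b)%nat = (a <= b).
Proof. by apply/idP/idP => [/Nat.leb_le/leP|/leP/Nat.leb_le]. Qed.
Lemma ltbE a b : (a <? b)%nat = (a < b).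
Proof. by apply/idP/idP => [/Nat.ltb_lt/ltP|/ltP/Nat.ltb_lt]. Qed.
Lemma eqbE a b : (a =? b)%nat = (a == b).
Proof. by apply/idP/idP => [/Nat.eqb_eq/eqP|/eqP/Nat.eqb_eq]. Qed.

Lemma lolS len b : lists_of_len len.+1 b =
  flatten [seq [seq x :: y | y <- lists_of_len len b] | x <- iota 0 b.+1].
Proof.
change (lists_of_len len.+1 b) with (List.flat_map (fun x => List.map (cons x) (lists_of_len len b)) (List.seq 0 b.+1)).
rewrite flat_mapE seqE; congr flatten; apply: eq_map => x; exact: mapE.
Qed.

Lemma lol_mem len b x :
  (x \in lists_of_len len b) = (size x == len) && all (fun y => y <= b) x.
Proof.
elim: len x => [|len IH] x; first by case: x.
rewrite lolS; apply/flattenP/idP.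
- move=> [s /mapP[z]]; rewrite mem_iota add0n => hz -> /mapP[w].
  rewrite IH => /andP[/eqP hs ha] ->; rewrite /= eqSS hs eqxx /= ha andbT.
  by rewrite -ltnS.
- move=> /andP[hs ha]; case: x hs ha => [|y x] // hs /andP[hy ha].
  exists [seq y :: w | w <- lists_of_len len b].
  + by apply/mapP; exists y => //; rewrite mem_iota add0n ltnS hy.
  + by apply/mapP; exists x => //; rewrite IH -eqSS hs; exact: ha.
Qed.

Lemma lol_uniq len b : uniq (lists_of_len len b).
Proof.
elim: len => [|len IH] //; rewrite lolS.
elim: (iota 0 b.+1) (iota_uniq 0 b.+1) => //= z s IHs /andP[hz hs].
rewrite cat_uniq IHs // andbT map_inj_uniq ?IH //=; last by move=> ? ? [].
apply/hasPn => w /flattenP[t /mapP[z' hz' ->]] /mapP[v _ ->].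
apply/mapP => -[v' _ [E _]]; by move: hz; rewrite -E hz'.
Qed.

Lemma sumn_const (T : Type) (s : seq T) c : sumn [seq c | _ <- s] = size s * c.
Proof. by elim: s => //= x s ->; rewrite mulSn. Qed.

Lemma lol_size len b : size (lists_of_len len b) = b.+1 ^ len.
Proof.
elim: len => [|len IH] //; rewrite lolS size_flatten /shape -map_comp expnS.
rewrite (eq_map (g := fun _ => b.+1 ^ len)); last by move=> x /=; rewrite size_map IH.
by rewrite sumn_const size_iota mulnC.
Qed.

Lemma lu_mem m b x :
  (x \in lists_upto m b) = (size x <= m) && all (fun y => y <= b) x.
Proof.
rewrite /lists_upto flat_mapE seqE; apply/flattenP/idP.
- move=> [s /mapP[l]]; rewrite mem_iota add0n ltnS => /andP[_ hl] ->.
  by rewrite lol_mem => /andP[/eqP -> ->]; rewrite hl.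
- move=> /andP[hs ha]; exists (lists_of_len (size x) b).
  + by apply/mapP; exists (size x); rewrite // mem_iota add0n ltnS.
  + by rewrite lol_mem eqxx.
Qed.

Lemma lu_uniq m b : uniq (lists_upto m b).
Proof.
rewrite /lists_upto flat_mapE seqE.
elim: (iota 0 m.+1) (iota_uniq 0 m.+1) => //= z s IHs /andP[hz hs].
rewrite cat_uniq IHs // andbT lol_uniq /=.
apply/hasPn => w /flattenP[t /mapP[z' hz' ->]]; rewrite !lol_mem => /andP[/eqP h1 _].
by apply/negP => /andP[/eqP h2 _]; move: hz; rewrite -h2 h1 hz'.
Qed.

Lemma inj_count (T1 T2 : eqType) (s1 : seq T1) (s2 : seq T2) (f : T1 -> T2) :
  uniq s1 -> {in s1 &, injective f} -> (forall x, x \in s1 -> f x \in s2) ->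
  size s1 <= size s2.
Proof.
move=> u inj sub; rewrite -(size_map f); apply: uniq_leq_size.
  by rewrite map_inj_in_uniq.
by move=> y /mapP[x hx ->]; apply: sub.
Qed.


Definition isP n (a : seq nat) := (sumn a == n) && all (leq 1) a && sorted geq a.
Definition PL n := filter (isP n) (lists_upto n n).

Lemma nonincrE a : nonincr a = sorted geq a.
Proof.
elim: a => // x [|y a] //= IH; rewrite IH lebE //.
Qed.

Lemma size_le_sumn a : all (leq 1) a -> size a <= sumn a.
Proof. elim: a => //= x a IH /andP[h1 h2]; have := IH h2; lia. Qed.

Lemma all_le_sumn a : all (fun y => y <= sumn a) a.
Proof.
elim: a => //= x a IH; rewrite leq_addr /=.
by apply/allP => y hy; have := allP IH y hy; lia.
Qed.

Lemma mem_lu_sum a m : size a <= m -> sumn a <= m -> a \in lists_upto m m.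
Proof.
move=> h1 h2; rewrite lu_mem h1 /=; apply/allP => y hy.
have := allP (all_le_sumn a) y hy; lia.
Qed.

Lemma mem_PL n a : (a \in PL n) = isP n a.
Proof.
rewrite mem_filter; case h: (isP n a) => //=.
move: h => /andP[/andP[/eqP hs ha] _]; apply: mem_lu_sum; last by rewrite hs.
by rewrite -hs size_le_sumn.
Qed.

Lemma uniq_PL n : uniq (PL n).
Proof. exact/filter_uniq/lu_uniq. Qed.

Lemma pcE n : part_count n = size (PL n).
Proof.
rewrite /part_count lenE filterE /PL; congr size; apply: eq_filter => a.
by rewrite eqbE sumnE' forallbE nonincrE /isP; congr (_ && _ && _); apply: eq_all => x; rewrite lebE.
Qed.

Lemma pZ n : p (Z.of_nat n) = size (PL n).
Proof.
rewrite /p; have -> : (Z.of_nat n <? 0)%Z = false by apply/Z.ltb_ge; lia.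
by rewrite Nat2Z.id pcE.
Qed.

Lemma geq_trans' : transitive geq.
Proof. move=> x y z /= h1 h2; lia. Qed.
Lemma geq_asym : antisymmetric geq.
Proof. move=> x y /andP[/= h1 h2]; lia. Qed.
Lemma geq_tot : total geq.
Proof. move=> x y /=; exact: leq_total. Qed.

Lemma PL_mono n : size (PL n) <= size (PL n.+1).
Proof.
apply: (inj_count (f := fun a => rcons a 1)) => //; first exact: uniq_PL.
  by move=> x y _ _; apply: rcons_injl.
move=> a; rewrite !mem_PL /isP => /andP[/andP[/eqP hs ha] hso].
rewrite -cats1 sumn_cat hs /= addn0 addn1 eqxx all_cat ha /=.
case: a ha hso {hs} => [|x a] //= ha hso.
rewrite cat_path hso /= andbT; move: ha => /andP[h1 /allP ha].
case: a ha {hso} => [|y a] ha //=.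
by apply: ha; rewrite -/(last y a) mem_last.
Qed.

Lemma PL_mono_le m n : m <= n -> size (PL m) <= size (PL n).
Proof.
elim: n => [|n IH]; first by rewrite leqn0 => /eqP ->.
rewrite leq_eqVlt => /orP[/eqP -> //|h]; apply: leq_trans (PL_mono n); exact: IH.
Qed.


Lemma insert_count n j i : 0 < j -> i * j <= n ->
  size (PL (n - i * j)) <= size (filter (fun a => i <= count_mem j a) (PL n)).
Proof.
move=> hj hij.
apply: (inj_count (f := fun a => sort geq (nseq i j ++ a))); first exact: uniq_PL.
- move=> x y; rewrite !mem_PL => /andP[_ hx] /andP[_ hy] E.
  apply: (sorted_eq geq_trans' geq_asym) => //.
  rewrite -(perm_cat2l (nseq i j)) -(perm_sort geq) E.
  by rewrite (perm_sort geq).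
- move=> a; rewrite mem_PL mem_filter mem_PL /isP => /andP[/andP[/eqP hs ha] _].
  rewrite count_sort count_cat count_nseq /= eqxx mul1n leq_addr /=.
  rewrite (perm_sumn (permEl (perm_sort geq _))) (perm_all _ (permEl (perm_sort geq _))).
  rewrite sort_sorted ?andbT; last exact: geq_tot.
  rewrite sumn_cat hs all_cat ha andbT sumn_nseq.
  apply/andP; split; first by apply/eqP; lia.
  by apply/allP => x /nseqP[-> _].
Qed.

Lemma minn_sum B c : \sum_(1 <= i < B.+1) (i <= c) = minn B c.
Proof.
elim: B => [|B IH]; first by rewrite big_geq // min0n.
rewrite big_nat_recr // IH; case: (leqP B.+1 c) => h /=; lia.
Qed.

Lemma sum_ge_count (T : Type) (s : seq T) (f : T -> nat) B :
  \sum_(1 <= i < B.+1) count (fun x => i <= f x) s <= \sum_(x <- s) f x.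
Proof.
elim: s => [|x s IH]; first by rewrite big_nil big1.
rewrite big_cons /=; rewrite big_split /= minn_sum.
apply: leq_add => //; exact: geq_minr.
Qed.

Lemma sum_jcount J x : \sum_(1 <= j < J.+1) j * (x == j) <= x.
Proof.
elim: J => [|J IH]; first by rewrite big_geq.
rewrite big_nat_recr //; case: (eqVneq x J.+1) => [->|hne].
- have -> : \sum_(1 <= j < J.+1) j * (J.+1 == j) = 0.
    rewrite big_nat big1 // => j /andP[_ hj]; have -> : (J.+1 == j) = false by apply/eqP; lia.
    by rewrite muln0.
  rewrite -[X in X <= _]/(addn 0 (J.+1 * true)); by rewrite add0n muln1.
- by rewrite -[X in X <= _]/(addn _ (J.+1 * false)) muln0 addn0.
Qed.

Lemma sum_jcount_list J a : \sum_(1 <= j < J.+1) j * count_mem j a <= sumn a.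
Proof.
elim: a => [|x a IH]; first by rewrite big1 // => j _; rewrite muln0.
rewrite /= (eq_bigr (fun j => j * (x == j) + j * count_mem j a)).
  rewrite big_split /=; apply: leq_add => //; exact: sum_jcount.
by move=> j _; rewrite mulnDr.
Qed.

Lemma growth n J : 0 < n -> n <= J * J -> 3 * J <= n -> 2 * size (PL (n - 3 * J)) <= size (PL n).
Proof.
move=> n0 hJ hK; set K := 3 * J; set q := size (PL (n - K)).
have step : forall j, 1 <= j <= J -> (K %/ j) * q <= \sum_(a <- PL n) count_mem j a.
  move=> j /andP[hj1 hjJ].
  apply: leq_trans (sum_ge_count (PL n) (fun a => count_mem j a) (K %/ j)).
  have -> : (K %/ j) * q = \sum_(1 <= i < (K %/ j).+1) q.
    by rewrite sum_nat_const_nat subn1.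
  rewrite big_nat [X in _ <= X]big_nat; apply: leq_sum => i /andP[hi1 hi2].
  have hij : i * j <= K.
    apply: leq_trans (leq_trunc_div K j); by rewrite leq_mul2r -ltnS hi2 orbT.
  rewrite -size_filter; have hin : i * j <= n by lia.
  apply: leq_trans (insert_count hj1 hin); apply: PL_mono_le; lia.
have tot : \sum_(1 <= j < J.+1) j * (K %/ j) * q <= n * size (PL n).
  apply: leq_trans (_ : \sum_(1 <= j < J.+1) j * \sum_(a <- PL n) count_mem j a <= _).
    rewrite big_nat [X in _ <= X]big_nat; apply: leq_sum => j /andP[h1 h2].
    rewrite -mulnA; apply: leq_mul => //; apply: step; lia.
  rewrite (eq_bigr (fun j => \sum_(a <- PL n) j * count_mem j a)); last by move=> j _; rewrite big_distrr.
  rewrite exchange_big /=.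
  apply: leq_trans (_ : \sum_(a <- PL n) sumn a <= _).
    apply: leq_sum => a _; exact: sum_jcount_list.
  rewrite big_seq_cond (eq_bigr (fun _ => n)).
    rewrite -big_seq_cond big_const_seq count_predT iter_addn_0 mulnC //.
  by move=> a /andP[]; rewrite mem_PL => /andP[/andP[/eqP]].
have low : 2 * n <= \sum_(1 <= j < J.+1) j * (K %/ j).
  apply: leq_trans (_ : \sum_(1 <= j < J.+1) (K.+1 - J) <= _).
    rewrite sum_nat_const_nat subn1 /=; rewrite /K; nia.
  rewrite big_nat [X in _ <= X]big_nat; apply: leq_sum => j /andP[h1 h2].
  have := divn_eq K j; have := ltn_pmod K h1; rewrite mulnC; lia.
have : 2 * n * q <= n * size (PL n).
  apply: leq_trans tot; rewrite -big_distrl /=; exact: leq_mul.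
move=> h; rewrite -(leq_pmul2l n0) mulnA (mulnC n 2); exact: h.
Qed.


Lemma growth_iter n J t : 0 < J -> n <= J * J -> t * (3 * J) <= n ->
  2 ^ t * size (PL (n - t * (3 * J))) <= size (PL n).
Proof.
move=> J0 hJ; elim: t => [|t IH] ht; first by rewrite mul1n subn0.
have h1 : t * (3 * J) <= n by rewrite mulSn in ht; lia.
apply: leq_trans (IH h1); rewrite expnS (mulnC 2) -mulnA leq_mul2l; apply/orP; right.
have := @growth (n - t * (3 * J)) J; rewrite mulSn.
have -> : n - t * (3 * J) - 3 * J = n - (3 * J + t * (3 * J)) by lia.
apply; [|nia|]; rewrite mulSn in ht; lia.
Qed.

Lemma decay n J m : 0 < J -> n <= J * J -> m <= n ->
  2 ^ (m %/ (3 * J)) * size (PL (n - m)) <= size (PL n).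
Proof.
move=> J0 hJ hm; set t := m %/ (3 * J).
have ht : t * (3 * J) <= m by exact: leq_trunc_div.
apply: leq_trans (growth_iter J0 hJ (leq_trans ht hm)).
rewrite leq_mul2l; apply/orP; right; apply: PL_mono_le; lia.
Qed.

Fixpoint unst k (R : seq nat) := if R is x :: R' then (x - k.+1) :: unst k.+1 R' else [::].
Fixpoint st k (v : seq nat) := if v is y :: v' then (y + k.+1) :: st k.+1 v' else [::].

Lemma size_unst k R : size (unst k R) = size R.
Proof. by elim: R k => //= x R IH k; rewrite IH. Qed.
Lemma size_st k v : size (st k v) = size v.
Proof. by elim: v k => //= x v IH k; rewrite IH. Qed.
Lemma stK k v : unst k (st k v) = v.
Proof. by elim: v k => //= x v IH k; rewrite IH addnK. Qed.
Lemma unstK k R : sorted ltn (k :: R) -> st k (unst k R) = R.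
Proof.
elim: R k => //= x R IH k /andP[h1 h2]; rewrite subnK // IH //.
case: R {IH} h2 => //= y R /andP[h3 h4]; rewrite h4 andbT; lia.
Qed.
Lemma unst_sorted k R : sorted ltn (k :: R) -> sorted leq (unst k R).
Proof.
elim: R k => //= x R IH k /andP[h1 h2].
case: R IH h2 => //= y R IH /andP[h3 h4]; rewrite -/(unst k.+2 R).
have := IH k.+1; rewrite /= h4 andbT => H; rewrite H; first by rewrite andbT; lia.
lia.
Qed.
Lemma st_sorted k v : sorted leq v -> sorted ltn (k :: st k v).
Proof.
elim: v k => //= x v IH k h; rewrite (_ : k < x + k.+1) /=; last lia.
have := IH k.+1 (path_sorted h); case: v {IH} h => //= y v /andP[h1 h2] /andP[h3 h4].
by rewrite h4 andbT; lia.
Qed.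

Lemma sumn_iota_sh a b r : sumn (iota (a + b) r) = a * r + sumn (iota b r).
Proof.
elim: r a b => [|r IH] a b /=; first by rewrite muln0.
by rewrite -addnS IH mulnS; lia.
Qed.

Definition T r := sumn (iota 1 r).

Lemma sumn_st k v : sumn (st k v) = sumn v + (k * size v + T (size v)).
Proof.
rewrite /T -(sumn_iota_sh k 1) addn1.
elim: v k => [|x v IH] k //=; rewrite IH /=; lia.
Qed.

Lemma sumn_unst k R : sorted ltn (k :: R) -> sumn R = sumn (unst k R) + (k * size R + T (size R)).
Proof. move=> h; rewrite -{1}(unstK h) sumn_st size_unst //. Qed.

Lemma T_add a b : T (a + b) = T a + b * a + T b.
Proof.
rewrite /T iotaD sumn_cat addnC (addnC 1 a) sumn_iota_sh; lia.
Qed.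

Lemma T2 r : 2 * T r = r * r.+1.
Proof.
elim: r => [|r IH] //; have := T_add r 1; rewrite addn1 => ->; rewrite (_ : T 1 = 1) //; nia.
Qed.

Lemma T_ge r : r <= T r.
Proof. have := T2 r; nia. Qed.


Definition gtr : rel nat := fun x y => y < x.

Lemma scatE a k : sc_at a k = [&& 1 <= k, k <= size a,
   all (fun i => nth 0 a i < nth 0 a i.-1) (iota 1 k.-1) &
   all (fun i => nth 0 a i.-1 < nth 0 a i) (iota k (size a - k))].
Proof.
rewrite /sc_at lenE !lebE !forallbE !seqE -!andbA; congr [&& _, _, _ & _].
- rewrite (_ : (k - 1)%coq_nat = k.-1); last by lia.
  apply: eq_all => i; rewrite /a_at !nthE ltbE; congr (nth 0 a _ < nth 0 a _); lia.
- rewrite (_ : (size a - k)%coq_nat = size a - k) //.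
  apply: eq_all => i; rewrite /a_at !nthE ltbE; congr (nth 0 a _ < nth 0 a _); lia.
Qed.

Lemma left_sorted a j : j < size a ->
  all (fun i => nth 0 a i < nth 0 a i.-1) (iota 1 j) = sorted gtr (take j.+1 a).
Proof.
move=> hj; apply/allP/(sortedP 0).
- move=> H i hi; have hi' : i.+1 < j.+1 by move: hi; rewrite size_take; case: ifP; lia.
  rewrite !nth_take /gtr; try lia.
  by have := H i.+1; rewrite mem_iota; apply; lia.
- move=> H i; rewrite mem_iota => /andP[h1 h2].
  have := H i.-1; rewrite !nth_take /gtr; try lia; rewrite prednK //; apply.
  rewrite size_take; case: ifP; lia.
Qed.

Lemma right_sorted a j : j < size a ->
  all (fun i => nth 0 a i.-1 < nth 0 a i) (iota j.+1 (size a - j.+1)) = sorted ltn (drop j a).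
Proof.
move=> hj; apply/allP/(sortedP 0).
- move=> H i; rewrite size_drop => hi; rewrite !nth_drop.
  have := H (j + i).+1; rewrite mem_iota /= addnS; apply; lia.
- move=> H i; rewrite mem_iota => /andP[h1 h2].
  have := H (i - j.+1); rewrite size_drop !nth_drop.
  rewrite (_ : j + (i - j.+1) = i.-1); last lia.
  rewrite (_ : j + (i - j.+1).+1 = i); last lia.
  apply; lia.
Qed.

Lemma sc_rank_ex a m : sc_rank a m -> exists j, [/\ j < size a, sorted gtr (take j.+1 a),
  sorted ltn (drop j a) & (Z.of_nat (size a) - 2 * Z.of_nat j.+1 + 1)%Z = m].
Proof.
rewrite /sc_rank existsbE seqE lenE => /hasP[k]; rewrite mem_iota => /andP[hk1 hk2].
rewrite scatE => /andP[/and4P[_ _ hl hr] /Z.eqb_eq hz].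
have hj : k.-1 < size a by lia.
exists k.-1; split => //.
- by rewrite -(left_sorted hj).
- by rewrite -(right_sorted hj) prednK.
- by rewrite prednK.
Qed.

Lemma sc_rank_in a m j : j < size a -> sorted gtr (take j.+1 a) -> sorted ltn (drop j a) ->
  (Z.of_nat (size a) - 2 * Z.of_nat j.+1 + 1)%Z = m -> sc_rank a m.
Proof.
move=> hj hl hr hz; rewrite /sc_rank existsbE seqE lenE; apply/hasP; exists j.+1.
  by rewrite mem_iota; lia.
rewrite scatE /= hj (left_sorted hj) hl (right_sorted hj) hr /=.
by apply/Z.eqb_eq.
Qed.


Lemma zsplit w : sorted geq w -> w = filter (leq 1) w ++ nseq (count_mem 0 w) 0.
Proof.
elim: w => //= x w IH hs; case: x hs => [|x] hs /=.
- have := order_path_min geq_trans' hs => /allP H.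
  have : all (pred1 0) w by apply/allP => y /H /=; rewrite leqn0.
  move/all_pred1P => E; rewrite E filter_nseq count_nseq /=. by rewrite add0n mul1n.
- by rewrite add0n {1}(IH (path_sorted hs)).
Qed.

Lemma count0E w : count_mem 0 w = size w - size (filter (leq 1) w).
Proof.
rewrite size_filter -(count_predC (leq 1) w) addnC addnK; apply: eq_count => x /=.
by rewrite eqn0Ngt.
Qed.

Lemma zsplit_det w1 w2 : sorted geq w1 -> sorted geq w2 -> size w1 = size w2 ->
  filter (leq 1) w1 = filter (leq 1) w2 -> w1 = w2.
Proof.
move=> h1 h2 hs hf; rewrite (zsplit h1) (zsplit h2) !count0E hs hf //.
Qed.

Lemma sumn_filter_pos v : sumn (filter (leq 1) v) = sumn v.
Proof. by elim: v => //= x v IH; case: x => //= x; rewrite IH. Qed.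

Lemma leq_trans' : transitive leq.
Proof. move=> x y z; exact: leq_trans. Qed.

Lemma ndl_bound r M B : size (filter (fun v => sorted leq v && (size v == r) && (sumn v == M))
   (lists_upto r B)) <= size (PL M).
Proof.
apply: (inj_count (f := fun v => rev (filter (leq 1) v))).
- exact/filter_uniq/lu_uniq.
- move=> x y; rewrite !mem_filter => /andP[/andP[/andP[hx1 /eqP hx2] _] _].
  move=> /andP[/andP[/andP[hy1 /eqP hy2] _] _] /(congr1 rev); rewrite !revK => E.
  rewrite -(revK x) -(revK y); congr rev; apply: zsplit_det.
  + by rewrite rev_sorted.
  + by rewrite rev_sorted.
  + by rewrite !size_rev hx2 hy2.
  + by rewrite !filter_rev E.
- move=> v; rewrite mem_filter mem_PL => /andP[/andP[/andP[h1 _] /eqP h3] _].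
  rewrite /isP sumn_rev sumn_filter_pos h3 eqxx all_rev filter_all /= rev_sorted.
  exact: sorted_filter leq_trans' _ _ h1.
Qed.

Lemma sumn_pred a : all (leq 1) a -> sumn (map predn a) + size a = sumn a.
Proof. elim: a => //= x a IH /andP[h1 h2]; have := IH h2; lia. Qed.

Lemma colrem N L : size (filter (fun a => size a == L) (PL N)) <= size (PL (N - L)).
Proof.
apply: (inj_count (f := fun a => filter (leq 1) (map predn a))).
- exact/filter_uniq/uniq_PL.
- move=> x y; rewrite mem_filter mem_PL => /andP[/eqP hx /andP[/andP[_ ax] sx]].
  rewrite mem_filter mem_PL => /andP[/eqP hy /andP[/andP[_ ay] sy]] E.
  have mp : forall a, all (leq 1) a -> a = map succn (map predn a).
    move=> a /allP ha; rewrite -map_comp -[LHS]map_id; apply/eq_in_map => z /ha /= hz.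
    by rewrite prednK.
  rewrite (mp _ ax) (mp _ ay); congr map; apply: zsplit_det => //.
  + by rewrite sorted_map; apply: sub_sorted sx => u w /= h; lia.
  + by rewrite sorted_map; apply: sub_sorted sy => u w /= h; lia.
  + by rewrite !size_map hx hy.
- move=> a; rewrite mem_filter mem_PL => /andP[/eqP hs /andP[/andP[/eqP hsum ha] hso]].
  rewrite mem_PL /isP sumn_filter_pos filter_all /=; apply/andP; split.
    by apply/eqP; have := sumn_pred ha; lia.
  apply: sorted_filter; first exact: geq_trans'.
  by rewrite sorted_map; apply: sub_sorted hso => u w /= h; lia.
Qed.

Lemma sum_ind y B : \sum_(0 <= i < B) (y == i) = (y < B).
Proof.
elim: B => [|B IH]; first by rewrite big_geq.
rewrite big_nat_recr // IH ltnS leq_eqVlt; case: (ltngtP y B) => //= h; lia.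
Qed.

Lemma count_split (T0 : eqType) (P : pred T0) (f : T0 -> nat) B s :
  {in s, forall x, P x -> f x < B} ->
  count P s = \sum_(0 <= i < B) count (fun x => P x && (f x == i)) s.
Proof.
elim: s => [|x s IH] H; first by rewrite big1.
rewrite /= big_split /= IH; last by move=> y hy; apply: H; rewrite inE hy orbT.
congr (_ + _); case hP: (P x) => /=; last by rewrite big1.
by rewrite sum_ind H // inE eqxx.
Qed.


Definition QV (m : Z) n (a : seq nat) := (1 <= size a) && (sumn a == n) && sc_rank a m.
Definition VL m n := filter (QV m n) (lists_upto n.+1 n).

Lemma VdE m n : V_d m n = size (VL m n).
Proof.
rewrite /V_d lenE filterE /VL; congr size; apply: eq_filter => a.
by rewrite lebE lenE eqbE sumnE'.
Qed.

Lemma mem_lu2 a m b : size a <= m -> sumn a <= b -> a \in lists_upto m b.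
Proof.
move=> h1 h2; rewrite lu_mem h1 /=; apply/allP => y hy.
have := allP (all_le_sumn a) y hy; lia.
Qed.

Lemma ltn_trans' : transitive ltn.
Proof. move=> x y z; exact: ltn_trans. Qed.

Lemma sc_struct a m : sc_rank a m -> exists j, [/\ j < size a,
  sorted ltn (nth 0 a j :: rev (take j a)), sorted ltn (nth 0 a j :: drop j.+1 a) &
  (Z.of_nat (size a) - 2 * Z.of_nat j.+1 + 1)%Z = m].
Proof.
move/sc_rank_ex => [j [hj hl hr hz]]; exists j; split => //.
- by rewrite -rev_rcons rev_sorted -take_nth.
- by rewrite -drop_nth.
Qed.

Lemma split_at a j : j < size a -> a = take j a ++ nth 0 a j :: drop j.+1 a.
Proof. by move=> hj; rewrite -drop_nth // cat_take_drop. Qed.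

Lemma sc_size a m : sc_rank a m -> size a <= (sumn a).+1.
Proof.
move/sc_struct => [j [hj hl hr _]].
have p1 := order_path_min ltn_trans' hl; have p2 := order_path_min ltn_trans' hr.
have a1 : all (leq 1) (rev (take j a)) by apply: sub_all p1 => x /=; lia.
have a2 : all (leq 1) (drop j.+1 a) by apply: sub_all p2 => x /=; lia.
have s1 := size_le_sumn a1; have s2 := size_le_sumn a2.
rewrite size_rev sumn_rev in s1; rewrite (split_at hj) size_cat sumn_cat /=; lia.
Qed.

Lemma mem_VL m n a : (a \in VL m n) = QV m n a.
Proof.
rewrite mem_filter; case h: (QV m n a) => //=.
move: h => /andP[/andP[h1 /eqP hs] hsc]; apply: mem_lu2; last by rewrite hs.
by rewrite -hs; apply: sc_size hsc.
Qed.

Lemma sc_rank_rev (a : seq nat) m : sc_rank a m -> sc_rank (rev a) (- m).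
Proof.
move=> /sc_rank_ex[j [hj hl hr hz]].
apply: (sc_rank_in (j := size a - j.+1)); rewrite ?size_rev.
- lia.
- rewrite take_rev (_ : size a - (size a - j.+1).+1 = j); last lia.
  by rewrite rev_sorted.
- rewrite drop_rev (_ : size a - (size a - j.+1) = j.+1); last lia.
  by rewrite rev_sorted.
- rewrite -hz; lia.
Qed.

Lemma V_sym m n : size (VL m n) <= size (VL (- m) n).
Proof.
apply: (inj_count (f := @rev nat)); first exact/filter_uniq/lu_uniq.
  by move=> x y _ _ /(congr1 rev); rewrite !revK.
move=> a; rewrite !mem_VL /QV size_rev sumn_rev => /andP[/andP[h1 h2] h3].
by rewrite h1 h2 sc_rank_rev.
Qed.

Lemma Vd_abs m n : V_d m n = V_d (Z.of_nat (Z.abs_nat m)) n.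
Proof.
case: (Z.le_gt_cases 0 m) => h.
  by rewrite Zabs2Nat.id_abs Z.abs_eq.
rewrite Zabs2Nat.id_abs Z.abs_neq; last lia.
rewrite !VdE; apply/eqP; rewrite eqn_leq V_sym /=.
by have := V_sym (- m) n; rewrite Z.opp_involutive.
Qed.


Lemma path_geq_nseq x k : path geq x (nseq k 0).
Proof. by elim: k x => //= k IH x; rewrite IH andbT. Qed.

Lemma sorted_geq_pad (a : seq nat) k : sorted geq a -> sorted geq (a ++ nseq k 0).
Proof.
case: a => [|x a] /= h; first by case: k => //= k; exact: path_geq_nseq.
by rewrite cat_path h path_geq_nseq.
Qed.

Lemma filt_pad (x : seq nat) k : all (leq 1) x -> filter (leq 1) (rev (x ++ nseq k 0)) = rev x.
Proof.
move=> ax; rewrite filter_rev filter_cat filter_nseq mul0n cats0.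
by move/all_filterP: ax => ->.
Qed.

Lemma size_pad (a : seq nat) l : size a <= l -> size (rev (a ++ nseq (l - size a) 0)) = l.
Proof. by move=> h; rewrite size_rev size_cat size_nseq subnKC. Qed.

Definition gl l (a : seq nat) := 0 :: st 0 (rev (a ++ nseq (l - size a) 0)).

Lemma lower l N : size (filter (fun a => size a <= l) (PL N)) <= size (VL (Z.of_nat l) (N + T l)).
Proof.
apply: (inj_count (f := gl l)); first exact/filter_uniq/uniq_PL.
- move=> x y; rewrite mem_filter mem_PL => /andP[_ /andP[/andP[_ ax] _]].
  rewrite mem_filter mem_PL => /andP[_ /andP[/andP[_ ay] _]] [] /(congr1 (unst 0)).
  rewrite !stK => /(congr1 (filter (leq 1))); rewrite !filt_pad //.
  by move/(congr1 rev); rewrite !revK.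
- move=> a; rewrite mem_filter mem_PL => /andP[hl /andP[/andP[/eqP hs ha] hso]].
  have sz := size_pad hl.
  rewrite mem_VL /QV /gl /= sumn_st sz sumn_rev sumn_cat sumn_nseq hs mul0n add0n addn0 eqxx /=.
  apply: (sc_rank_in (j := 0)).
  + by [].
  + by rewrite /= take0.
  + rewrite drop0; apply: st_sorted; rewrite rev_sorted; exact: sorted_geq_pad.
  + rewrite [size _]/= size_st sz; lia.
Qed.

Definition dd l j c := c + c * j + c * (l + j) + j * l + 2 * T j.

Lemma code_props (l N j c : nat) (a : seq nat) : QV (Z.of_nat l) (N + T l) a ->
  (size a - l.+1) %/ 2 = j -> nth 0 a j = c ->
  let x := unst c (rev (take j a)) ++ unst c (drop j.+1 a) in
  [/\ size x = j + (l + j), sorted leq (drop j x), sumn x + dd l j c = N &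
      a = rev (st c (take j x)) ++ c :: st c (drop j x)].
Proof.
move=> /andP[/andP[h1 /eqP hs] /sc_struct[j' [hj hl hr hz]]] hj2 hc x.
have hsz : size a = l + 2 * j' + 1 by lia.
have ej : j' = j by rewrite -hj2 hsz; lia.
subst j'; rewrite hc in hl hr.
have sL : size (take j a) = j by rewrite size_takel //; lia.
have sR : size (drop j.+1 a) = l + j by rewrite size_drop; lia.
have tx : take j x = unst c (rev (take j a)) by rewrite take_size_cat // size_unst size_rev.
have dx : drop j x = unst c (drop j.+1 a) by rewrite drop_size_cat // size_unst size_rev.
split.
- by rewrite size_cat !size_unst size_rev sL sR.
- by rewrite dx; apply: unst_sorted.
- have e1 := sumn_unst hl; have e2 := sumn_unst hr.
  rewrite size_rev sL sumn_rev in e1; rewrite sR T_add in e2.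
  have e3 : sumn a = sumn (take j a) + c + sumn (drop j.+1 a).
    by rewrite {1}(split_at hj) sumn_cat /= hc; lia.
  rewrite sumn_cat /dd; rewrite hs in e3; rewrite mulnDr in e2 *; lia.
- by rewrite tx dx (unstK hl) (unstK hr) revK -hc -split_at.
Qed.


Definition Qjc l N j c (a : seq nat) := QV (Z.of_nat l) (N + T l) a &&
  ((size a - l.+1) %/ 2 == j) && (nth 0 a j == c).

Definition VLu l N j c (u : seq nat) := filter (fun v => sorted leq v && (size v == l + j) &&
   (sumn v == N - dd l j c - sumn u)) (lists_upto (l + j) N).

Lemma sumn_map_le (T0 : Type) (s : seq T0) (f : T0 -> nat) B :
  (forall u, u \in map f s -> u <= B) -> sumn (map f s) <= size s * B.
Proof.
elim: s => //= x s IH H; rewrite mulSn; apply: leq_add.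
  by apply: H; rewrite inE eqxx.
by apply: IH => u hu; apply: H; rewrite inE hu orbT.
Qed.

Lemma upper_jc l N j c :
  size (filter (Qjc l N j c) (lists_upto (N + T l).+1 (N + T l)))
  <= (dd l j c <= N) * (N.+1 ^ j * size (PL (N - dd l j c))).
Proof.
case: (leqP (dd l j c) N) => hd; last first.
  rewrite mul0n leqn0 size_filter; apply/eqP/eqP; rewrite eqn0Ngt -has_count.
  apply/hasPn => a _; apply/negP => /andP[/andP[hq /eqP e1] /eqP e2].
  have [_ _ hs _] := code_props hq e1 e2; lia.
rewrite mul1n.
apply: (@leq_trans (size [seq u ++ v | u <- lists_of_len j N, v <- VLu l N j c u])).
  apply: (inj_count (f := fun a => unst c (rev (take j a)) ++ unst c (drop j.+1 a))).
  - exact/filter_uniq/lu_uniq.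
  - move=> a b; rewrite !mem_filter => /andP[/andP[/andP[ha e1] /eqP e2] _].
    move=> /andP[/andP[/andP[hb e3] /eqP e4] _] E.
    have [_ _ _ ->] := code_props ha (eqP e1) e2.
    have [_ _ _ ->] := code_props hb (eqP e3) e4.
    by rewrite E.
  - move=> a; rewrite mem_filter => /andP[/andP[/andP[ha /eqP e1] /eqP e2] _].
    have [h1 h2 h3 _] := code_props ha e1 e2.
    set x := _ ++ _ in h1 h2 h3 *.
    apply/allpairsPdep; exists (take j x), (drop j x); split; last by rewrite cat_take_drop.
    + rewrite lol_mem size_takel ?h1 ?leq_addr // eqxx /=.
      apply/allP => y /mem_take hy; have := allP (all_le_sumn x) y hy; lia.
    + rewrite mem_filter h2 size_drop h1 /=.
      have e : sumn x = sumn (take j x) + sumn (drop j x) by rewrite -sumn_cat cat_take_drop.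
      apply/andP; split.
        apply/andP; split; first by apply/eqP; lia.
        apply/eqP; lia.
      apply: mem_lu2; first by rewrite size_drop h1; lia.
      lia.
rewrite size_allpairs_dep -(lol_size j N); apply: sumn_map_le => s /mapP[u hu ->].
apply: leq_trans (ndl_bound _ _ _) _; apply: PL_mono_le; exact: leq_subr.
Qed.


Lemma V_upper l N :
  size (VL (Z.of_nat l) (N + T l)) <= \sum_(0 <= j < (N + T l).+1) \sum_(0 <= c < (N + T l).+1)
     (dd l j c <= N) * (N.+1 ^ j * size (PL (N - dd l j c))).
Proof.
set n := N + T l; rewrite /VL size_filter (count_split (f := fun a => (size a - l.+1) %/ 2) (B := n.+1)).
  rewrite big_nat [X in _ <= X]big_nat; apply: leq_sum => j _.
  rewrite (count_split (f := fun a => nth 0 a j) (B := n.+1)).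
    rewrite big_nat [X in _ <= X]big_nat; apply: leq_sum => c _.
    rewrite -size_filter; exact: upper_jc.
  move=> a; rewrite lu_mem => /andP[_ /allP ha] _.
  case: (ltnP j (size a)) => hj; last by rewrite nth_default.
  by rewrite ltnS; apply: ha; apply: mem_nth.
move=> a; rewrite lu_mem => /andP[hs _] _.
have := leq_div (size a - l.+1) 2; lia.
Qed.

Lemma V_lower l N :
  size (PL N) <= size (VL (Z.of_nat l) (N + T l)) + \sum_(0 <= L < N.+1) (l < L) * size (PL (N - L)).
Proof.
rewrite -(count_predC (fun a => size a <= l) (PL N)); apply: leq_add.
  by rewrite -size_filter; exact: lower.
rewrite (count_split (f := fun a => size a) (B := N.+1)).
  rewrite big_nat [X in _ <= X]big_nat; apply: leq_sum => L _.
  case: (ltnP l L) => hL.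
    rewrite mul1n; apply: leq_trans (colrem N L); rewrite size_filter.
    by apply: sub_count => a /andP[].
  rewrite mul0n leqn0; apply/eqP/eqP; rewrite eqn0Ngt -has_count.
  apply/hasPn => a _; apply/negP => /andP[/= h1 /eqP h2]; lia.
move=> a; rewrite mem_PL => /andP[/andP[/eqP hs ha] _] _.
by rewrite ltnS -hs; apply: size_le_sumn.
Qed.


Lemma dd_ge l j c : (j + c) * l <= dd l j c.
Proof. rewrite /dd; nia. Qed.

Lemma pow_bound (N Q g j c : nat) : 0 < j + c -> N.+1 * Q <= 2 ^ g -> Q * N.+1 ^ j <= 2 ^ ((j + c) * g).
Proof.
move=> hjc hQ; case: (posnP Q) => [->|Q0]; first by rewrite mul0n.
rewrite (mulnC (j + c)) expnM; apply: leq_trans (_ : (N.+1 * Q) ^ (j + c) <= _); last by rewrite leq_exp2r.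
rewrite expnMn expnD -mulnA (mulnC Q) leq_mul2l; apply/orP; right.
apply: leq_trans (_ : Q ^ (j + c) <= _); last by rewrite leq_pmull // expn_gt0.
by rewrite -{1}(expn1 Q) leq_pexp2l.
Qed.

Lemma term_bound l N J Q j c : 0 < J -> N <= J * J -> N.+1 * Q <= 2 ^ (l %/ (3 * J)) ->
  Q * ((dd l j c <= N) * (N.+1 ^ j * size (PL (N - dd l j c))))
  <= (j == 0) * (c == 0) * Q * size (PL N) + size (PL N).
Proof.
move=> J0 hJ hQ.
have [hjc|hjc] := posnP (j + c).
  have -> : j = 0 by lia.
  have -> : c = 0 by lia.
  rewrite /dd /= !muln0 /= addn0 !mul1n subn0; exact: leq_addr.
apply: leq_trans (leq_addl _ _).
case: (leqP (dd l j c) N) => hd; last by rewrite mul0n muln0.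
rewrite mul1n mulnA; apply: leq_trans (decay J0 hJ hd); rewrite leq_mul2r; apply/orP; right.
apply: leq_trans (pow_bound hjc hQ) _; apply: leq_pexp2l => //.
rewrite leq_divRL; last lia.
apply: leq_trans (dd_ge l j c); rewrite -mulnA leq_mul2l; apply/orP; right.
exact: leq_trunc_div.
Qed.


Lemma sum_delta B X : 0 < B -> \sum_(0 <= i < B) (i == 0) * X = X.
Proof.
case: B => // B _; rewrite big_nat_recl // big1 ?addn0 ?mul1n //.
Qed.

Lemma final_upper l N J Q : 0 < J -> N <= J * J -> N.+1 * Q <= 2 ^ (l %/ (3 * J)) ->
  Q * size (VL (Z.of_nat l) (N + T l)) <= Q * size (PL N) + (N + T l).+1 ^ 2 * size (PL N).
Proof.
move=> J0 hJ hQ; set n := N + T l; set P := size (PL N).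
apply: leq_trans (leq_mul (leqnn Q) (V_upper l N)) _.
rewrite big_distrr /=.
apply: leq_trans (_ : \sum_(0 <= j < n.+1) \sum_(0 <= c < n.+1)
     ((j == 0) * (c == 0) * Q * P + P) <= _).
  rewrite big_nat [X in _ <= X]big_nat; apply: leq_sum => j _.
  rewrite big_distrr /= big_nat [X in _ <= X]big_nat; apply: leq_sum => c _.
  exact: (@term_bound l N J Q j c J0 hJ hQ).
apply: leq_trans (_ : \sum_(0 <= j < n.+1) ((j == 0) * (Q * P) + n.+1 * P) <= _).
  rewrite big_nat [X in _ <= X]big_nat; apply: leq_sum => j _.
  rewrite big_split /= sum_nat_const_nat subn0 leq_add2r.
  apply: leq_trans (_ : \sum_(0 <= c < n.+1) (c == 0) * ((j == 0) * (Q * P)) <= _).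
    rewrite big_nat [X in _ <= X]big_nat; apply: leq_sum => c _.
    by rewrite (mulnC (j == 0)) -!mulnA.
  by rewrite sum_delta.
by rewrite big_split /= sum_delta // sum_nat_const_nat subn0 expnS expn1 mulnA.
Qed.

Lemma final_lower l N J Q : 0 < J -> N <= J * J -> N.+1 * Q <= 2 ^ (l %/ (3 * J)) ->
  Q * size (PL N) <= Q * size (VL (Z.of_nat l) (N + T l)) + (N + T l).+1 ^ 2 * size (PL N).
Proof.
move=> J0 hJ hQ; set n := N + T l; set P := size (PL N).
apply: leq_trans (leq_mul (leqnn Q) (V_lower l N)) _; rewrite mulnDr leq_add2l.
apply: leq_trans (_ : N.+1 * P <= _); last first.
  rewrite leq_mul2r; apply/orP; right; rewrite expnS expn1; nia.
rewrite big_distrr /= -(subn0 N.+1) -sum_nat_const_nat big_nat [X in _ <= X]big_nat.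
apply: leq_sum => L /andP[_ hL].
case: (ltnP l L) => hlL; last by rewrite mul0n muln0.
rewrite mul1n; have hLN : L <= N by lia.
apply: leq_trans (decay J0 hJ hLN); rewrite leq_mul2r; apply/orP; right.
apply: leq_trans (_ : 2 ^ (l %/ (3 * J)) <= _).
  by apply: leq_trans hQ; apply: leq_pmull.
by apply: leq_pexp2l => //; apply: leq_div2r; apply: ltnW.
Qed.


Lemma powE a b : Nat.pow a b = expn a b.
Proof. by elim: b => //= b IH; rewrite IH expnS. Qed.

Lemma main_nat l N J g Q : (0 < J)%coq_nat -> (N <= J * J)%coq_nat -> (g * (3 * J) <= l)%coq_nat ->
  (S N * Q <= Nat.pow 2 g)%coq_nat ->
  (Q * V_d (Z.of_nat l) (N + T l) <= Q * p (Z.of_nat N) + Nat.pow (S (N + T l)) 2 * p (Z.of_nat N))%coq_nat /\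
  (Q * p (Z.of_nat N) <= Q * V_d (Z.of_nat l) (N + T l) + Nat.pow (S (N + T l)) 2 * p (Z.of_nat N))%coq_nat.
Proof.
move=> /ltP J0 /leP hJ /leP hg /leP hQ; rewrite !powE in hQ *.
have hQ' : N.+1 * Q <= 2 ^ (l %/ (3 * J)).
  apply: leq_trans hQ _; apply: leq_pexp2l => //; rewrite leq_divRL //; lia.
rewrite VdE pZ; split; apply/leP.
- exact: (final_upper J0 hJ hQ').
- exact: (final_lower J0 hJ hQ').
Qed.

Lemma T2' r : (2 * T r = r * S r)%coq_nat.
Proof. exact: T2. Qed.

End Comb.

Open Scope R_scope.

Lemma ln2_ge : / 2 <= ln 2.
Proof.
assert (H : exp (/ 2) < 2).
{ assert (E : exp (/2) * exp (/2) = exp 1) by (rewrite <- exp_plus; f_equal; lra).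
  assert (P : 0 < exp (/2)) by apply exp_pos.
  pose proof exp_le_3. nra. }
rewrite <- (ln_exp (/2)); left; apply ln_increasing; [apply exp_pos | exact H].
Qed.

Lemma ln2_le : ln 2 <= 1.
Proof.
rewrite <- (ln_exp 1); destruct (Rle_lt_dec 2 (exp 1)) as [h|h].
- destruct h as [h|h]; [left; apply ln_increasing; lra | rewrite h; lra].
- pose proof (exp_ineq1_le 1); lra.
Qed.

Lemma pow2_exp (g : nat) : exp (INR g / 2) <= 2 ^ g.
Proof.
rewrite <- (exp_ln (2 ^ g)) by (apply pow_lt; lra).
rewrite ln_pow by lra.
destruct (Rle_lt_dec (INR g / 2) (INR g * ln 2)) as [h|h].
- destruct h as [h|h]; [left; apply exp_increasing; lra | rewrite h; lra].
- pose proof ln2_ge; pose proof (pos_INR g); nra.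
Qed.

Lemma exp_mono x y : x <= y -> exp x <= exp y.
Proof. intros [h|h]; [left; apply exp_increasing; lra | subst; lra]. Qed.

Lemma threshold (N : nat) : (3 ^ 400 <= N)%nat -> 400 <= ln (INR N).
Proof.
intros h; apply le_INR in h; rewrite pow_INR in h.
assert (h3 : 1 <= ln (INR 3)).
{ rewrite <- (ln_exp 1). simpl INR. destruct (Rle_lt_dec (1+1+1) (exp 1)) as [a|a].
  - pose proof exp_le_3 as e3. assert (E : exp 1 = 3) by lra. rewrite E. replace (1+1+1) with 3 by lra; lra.
  - left; apply ln_increasing; [apply exp_pos|lra]. }
assert (hp : 0 < INR 3 ^ 400) by (apply pow_lt; simpl; lra).
assert (l1 : ln (INR 3 ^ 400) <= ln (INR N)).
{ destruct h as [h|h]; [left; apply ln_increasing; lra | rewrite h; lra]. }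
rewrite ln_pow in l1 by (simpl; lra).
assert (INR 400 = 400) by (rewrite INR_IZR_INZ; reflexivity).
nra.
Qed.

Lemma exp_pow_n a n : exp a ^ n = exp (INR n * a).
Proof.
induction n as [|n IH]; simpl pow.
- simpl; rewrite Rmult_0_l, exp_0; lra.
- rewrite IH, <- exp_plus, S_INR; f_equal; ring.
Qed.

Lemma sqrt_small u : 400 <= u -> sqrt u <= u / 20.
Proof.
intros h; rewrite <- (sqrt_square (u / 20)) by lra.
apply sqrt_le_1_alt; nra.
Qed.

Lemma Jbound N : (1 <= N)%nat -> INR (S (Nat.sqrt N)) <= 2 * sqrt (INR N).
Proof.
intros h; pose proof (Nat.sqrt_spec' N) as [s1 _].
apply le_INR in s1; rewrite mult_INR in s1.
assert (hs : INR (Nat.sqrt N) <= sqrt (INR N)).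
{ rewrite <- (sqrt_square (INR (Nat.sqrt N))) by apply pos_INR.
  apply sqrt_le_1_alt; exact s1. }
assert (h1 : 1 <= sqrt (INR N)).
{ rewrite <- sqrt_1; apply sqrt_le_1_alt; apply (le_INR 1); exact h. }
rewrite S_INR; lra.
Qed.

Lemma exp_ge_x1 x : 1 <= x -> x + 1 <= exp (ln x + 1).
Proof.
intros h; rewrite exp_plus, exp_ln by lra.
pose proof (exp_ineq1_le 1); nra.
Qed.

Lemma expo u : 400 <= u -> 1 + 5 * (u + 1) + u * sqrt u <= u * u / 12 - / 2.
Proof.
intros h; pose proof (sqrt_small u h) as s.
assert (u * sqrt u <= u * (u / 20)) by (apply Rmult_le_compat_l; lra).
nra.
Qed.

Lemma key_real (x M : R) (g Q : nat) : 1 <= x -> 400 <= ln x ->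
  (ln x) * (ln x) / 6 <= INR g + 1 -> 0 <= M -> M <= (x + 1) ^ 4 ->
  2 ^ g < (x + 1) * (INR Q + 1) -> M * exp (ln x * sqrt (ln x)) <= INR Q.
Proof.
intros hx hu hg hM0 hM hQ.
set (u := ln x) in *.
set (e := exp (u * sqrt u)).
assert (he : 1 <= e).
{ unfold e; pose proof (exp_ineq1_le (u * sqrt u)).
  pose proof (sqrt_pos u). assert (0 <= u * sqrt u) by nra. lra. }
assert (h5 : (x + 1) ^ 5 <= exp (INR 5 * (u + 1))).
{ rewrite <- exp_pow_n. apply pow_incr; split; [lra | apply exp_ge_x1; exact hx]. }
assert (h2 : 2 <= exp 1) by (pose proof (exp_ineq1_le 1); lra).
assert (hchain : 2 * (x + 1) ^ 5 * e <= 2 ^ g).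
{ apply Rle_trans with (exp 1 * exp (INR 5 * (u + 1)) * e).
  - apply Rmult_le_compat_r; [lra|]. apply Rmult_le_compat; try lra.
    apply pow_le; lra.
  - apply Rle_trans with (exp (INR g / 2)); [|apply pow2_exp].
    unfold e; rewrite <- !exp_plus; apply exp_mono.
    pose proof (expo u hu). assert (INR 5 = 5) by (simpl; lra). nra. }
assert (hx5 : x + 1 <= (x + 1) ^ 5 * e).
{ assert (x + 1 <= (x + 1) ^ 5).
  { replace ((x+1)^5) with ((x+1) * ((x+1)^4)) by ring.
    assert (1 <= (x+1)^4) by (apply pow_R1_Rle; lra). nra. }
  nra. }
assert (hA : (x + 1) * (M * e + 1) <= 2 * (x + 1) ^ 5 * e).
{ assert (M * e <= (x + 1) ^ 4 * e) by (apply Rmult_le_compat_r; lra).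
  replace ((x+1)^5) with ((x+1) * ((x+1)^4)) in * by ring. nra. }
assert (hB : (x + 1) * (M * e + 1) < (x + 1) * (INR Q + 1)) by lra.
apply Rmult_lt_reg_l in hB; [|lra]. fold e. lra.
Qed.

Theorem mainTheorem6 :
  exists (C : R) (N0 : nat),
    forall (N : nat) (l : Z),
      (N0 <= N)%nat ->
      sqrt (INR N) * (ln (INR N))^2 < IZR (Z.abs l) ->
      IZR (Z.abs l) <= INR N / 2 ->
      Rabs (INR (V_d l (N + (Z.abs_nat l * (Z.abs_nat l + 1)) / 2)%nat)
            - INR (p (Z.of_nat N)))
        <= C * INR (p (Z.of_nat N)) * Rpower (INR N) (- sqrt (ln (INR N))).
Proof.
exists 1, (3 ^ 400)%nat. intros N l hN h1 h2.
pose proof (threshold N hN) as hu.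
assert (hN1 : (1 <= N)%nat).
{ pose proof (Nat.pow_nonzero 3 400 ltac:(lia)). lia. }
set (L := Z.abs_nat l).
assert (hL : IZR (Z.abs l) = INR L).
{ unfold L; rewrite INR_IZR_INZ, Zabs2Nat.id_abs; reflexivity. }
rewrite hL in h1, h2.
assert (hT : ((L * (L + 1)) / 2 = Comb.T L)%nat).
{ rewrite Nat.add_1_r, <- Comb.T2', Nat.mul_comm, Nat.div_mul; lia. }
fold L; rewrite hT, Comb.Vd_abs; fold L.
set (x := INR N) in *. set (u := ln x) in *.
assert (hx : 1 <= x) by (apply (le_INR 1); exact hN1).
set (J := S (Nat.sqrt N)).
set (g := (L / (3 * J))%nat).
set (Q := (2 ^ g / S N)%nat).
assert (hJJ : (N <= J * J)%nat) by (pose proof (Nat.sqrt_spec' N); unfold J; lia).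
assert (hg : (g * (3 * J) <= L)%nat).
{ unfold g; rewrite Nat.mul_comm; apply Nat.Div0.mul_div_le. }
assert (hQ : (S N * Q <= 2 ^ g)%nat) by (unfold Q; apply Nat.Div0.mul_div_le).
destruct (@Comb.main_nat L N J g Q ltac:(unfold J; lia) hJJ hg hQ) as [U Lo].
change (ssrnat.addn N (Comb.T L)) with (N + Comb.T L)%nat in U, Lo.
set (n := (N + Comb.T L)%nat) in *.
set (V := V_d (Z.of_nat L) n) in *. set (P := p (Z.of_nat N)) in *.
apply le_INR in U; apply le_INR in Lo.
rewrite !plus_INR, !mult_INR, !pow_INR in U, Lo.
set (M := INR (S n) ^ 2) in *.
assert (hLN : (L <= N)%nat) by (apply INR_le; fold x; lra).
assert (hM : M <= (x + 1) ^ 4).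
{ assert (hTL : (Comb.T L <= L * L)%nat) by (pose proof (Comb.T2' L); nia).
  assert (hn : (S n <= S N * S N)%nat) by (unfold n; nia).
  apply le_INR in hn; rewrite mult_INR in hn.
  unfold M; replace ((x + 1) ^ 4) with ((INR (S N) * INR (S N)) ^ 2).
  - apply pow_incr; split; [apply pos_INR | exact hn].
  - rewrite S_INR; fold x; ring. }
assert (hM0 : 0 <= M) by (unfold M; apply pow_le, pos_INR).
assert (hgu : u * u / 6 <= INR g + 1).
{ pose proof (Nat.mul_succ_div_gt L (3 * J) ltac:(unfold J; lia)) as d.
  fold g in d; apply lt_INR in d; rewrite !mult_INR in d; rewrite (S_INR g) in d.
  assert (e3 : INR 3 = 3) by (simpl; lra). rewrite e3 in d.
  pose proof (Jbound N hN1) as jb; fold J x in jb.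
  assert (sx : 0 < sqrt x) by (apply sqrt_lt_R0; lra).
  assert (g0 : 0 <= INR g + 1) by (pose proof (pos_INR g); lra).
  assert (j1 : INR J * (INR g + 1) <= 2 * sqrt x * (INR g + 1)) by (apply Rmult_le_compat_r; lra).
  assert (h3 : sqrt x * (u * u) < sqrt x * (6 * (INR g + 1))).
  { replace (u * u) with (u ^ 2) by ring. lra. }
  apply Rmult_lt_reg_l in h3; lra. }
assert (hQr : 2 ^ g < (x + 1) * (INR Q + 1)).
{ pose proof (Nat.mul_succ_div_gt (2 ^ g) (S N) ltac:(lia)) as d.
  fold Q in d; apply lt_INR in d; rewrite mult_INR, pow_INR, !S_INR in d.
  fold x in d; replace (INR 0 + 1 + 1) with 2 in d by (simpl; lra); lra. }
pose proof (key_real x M g Q hx hu hgu hM0 hM hQr) as K.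
fold u in K.
set (e := exp (u * sqrt u)) in *.
assert (he : 0 < e) by apply exp_pos.
assert (hR : Rpower x (- sqrt u) = / e).
{ unfold Rpower, e; rewrite <- exp_Ropp; f_equal; fold u; ring. }
rewrite hR.
assert (hP : 0 <= INR P) by apply pos_INR.
assert (hMe : M * e <= INR Q) by exact K.
assert (hM1 : 1 <= M).
{ unfold M; apply pow_R1_Rle; rewrite S_INR; pose proof (pos_INR n); lra. }
assert (he1 : 1 <= e).
{ unfold e; pose proof (exp_ineq1_le (u * sqrt u)). pose proof (sqrt_pos u). nra. }
assert (hQ0 : 0 < INR Q) by nra.
assert (A1 : INR Q * (INR V - INR P) * e <= INR Q * INR P).
{ assert (INR Q * (INR V - INR P) <= M * INR P) by lra. nra. }
assert (A2 : INR Q * (INR P - INR V) * e <= INR Q * INR P).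
{ assert (INR Q * (INR P - INR V) <= M * INR P) by lra. nra. }
assert (B1 : (INR V - INR P) * e <= INR P).
{ apply (Rmult_le_reg_l (INR Q)); [exact hQ0|]. lra. }
assert (B2 : (INR P - INR V) * e <= INR P).
{ apply (Rmult_le_reg_l (INR Q)); [exact hQ0|]. lra. }
apply Rabs_le; split.
- apply (Rmult_le_reg_r e); [exact he|]. field_simplify; [|lra]. lra.
- apply (Rmult_le_reg_r e); [exact he|]. field_simplify; [|lra]. lra.
Qed.
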